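(* Let $H$ be a connected graph and consider Graph Substructure Networks (GSN, in either the GSN-v or the GSN-e variant) whose structural features are computed from the substructure collection $\mathcal{H}=\{H\}$. Suppose one of the following holds: (1) $H$ is not a star graph (of any size; here single vertices and single edges count as star graphs), and the structural features are computed by (not necessarily induced) subgraph matching, i.e. one counts all subgraphs $G_S$ of $G$ with $G_S\simeq H$, $\mathcal{V}_{G_S}\subseteq\mathcal{V}_G$, $\mathcal{E}_{G_S}\subseteq\mathcal{E}_G$; or (2) $H$ is neither a single vertex nor a single edge, and the structural features are computed by induced subgraph matching, i.e. one counts only subgraphs $G_S\simeq H$ with $\mathcal{E}_{G_S}=\mathcal{E}_G\cap(\mathcal{V}_{G_S}\times\mathcal{V}_{G_S})$. Then GSN is strictly more powerful than MPNNs and than the 1-WL test: (a) every function on graphs computable by an MPNN is computable by a GSN, and for any two (vertex-labelled) graphs that the 1-WL test distinguishes there exists a GSN (with suitable, e.g. injective, update and aggregation functions) producing different graph-level outputs for them; and (b) there exist two graphs $G_1,G_2$ that the 1-WL test (and hence every MPNN) does not distinguish, but for which some GSN produces different graph-level outputs.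
   Context: Graphs are finite, simple, undirected, with vertex set $\mathcal{V}_G$ and edge set $\mathcal{E}_G$, and possibly with vertex features (labels) from a countable set and edge features $\mathbf{e}_{u,v}$. Two graphs are isomorphic ($G\simeq H$) if there is an adjacency-preserving bijection between their vertex sets. For a graph $H$, $\mathrm{Aut}(H)$ is its automorphism group; the vertex orbits of $H$ are the classes $O^V_{H,1},\dots,O^V_{H,d_H}$ of the partition of $\mathcal{V}_H$ under $\mathrm{Aut}(H)$. Every automorphism $g$ induces a map $(u,v)\mapsto(g(u),g(v))$ on edges; the resulting classes of (oriented) edges are the edge orbits $O^E_{H,1},\dots$. Vertex structural features: for a graph $G$, a vertex $v$ and orbit index $i$, $x^V_{H,i}(v)=|\{G_S\subseteq G: G_S\simeq H,\ v\in\mathcal{V}_{G_S},\ f(v)\in O^V_{H,i}\}|$, where $f:\mathcal{V}_{G_S}\to\mathcal{V}_H$ is any isomorphism (the orbit does not depend on the choice). Edge structural features: $x^E_{H,i}(u,v)=|\{G_S\simeq H:(u,v)\in\mathcal{E}_{G_S},\ (f(u),f(v))\in O^E_{H,i}\}|$. For a collection $\mathcal{H}=\{H_1,\dots,H_K\}$, $\mathbf{x}^V_v$ and $\mathbf{x}^E_{u,v}$ are the concatenations over all $H\in\mathcal{H}$ and all orbits. A GSN layer updates vertex states by $\mathbf{h}^{t+1}_v=\mathrm{UP}^{t+1}(\mathbf{h}^t_v,\mathbf{m}^{t+1}_v)$, where for GSN-v $\mathbf{m}^{t+1}_v=M^{t+1}(\{\!\{(\mathbf{h}^t_v,\mathbf{h}^t_u,\mathbf{x}^V_v,\mathbf{x}^V_u,\mathbf{e}_{u,v})\}\!\}_{u\in\mathcal{N}(v)})$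 and for GSN-e $\mathbf{m}^{t+1}_v=M^{t+1}(\{\!\{(\mathbf{h}^t_v,\mathbf{h}^t_u,\mathbf{x}^E_{u,v},\mathbf{e}_{u,v})\}\!\}_{u\in\mathcal{N}(v)})$; here $\{\!\{\cdot\}\!\}$ denotes a multiset, $\mathrm{UP}^{t+1}$ is an arbitrary function and $M^{t+1}$ an arbitrary function on multisets, and $\mathbf{h}^0_v$ are the input vertex features. A graph-level output is obtained by applying a readout function to the multiset of final vertex states (e.g. a sum followed by a function). An MPNN is the same architecture without the structural features $\mathbf{x}^V,\mathbf{x}^E$. The 1-WL test assigns initial colours $c^0_v$ (the vertex labels) and refines $c^{t+1}_v=\mathrm{HASH}(c^t_v,\{\!\{c^t_u\}\!\}_{u\in\mathcal{N}(v)})$ with an injective $\mathrm{HASH}$; it distinguishes two graphs if their colour histograms differ at some iteration. A star graph is $K_{1,m}$ for some $m\ge 0$. *)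

(* Defs.v *)
From Stdlib Require Import List Permutation.
From mathcomp Require Import all_boot all_fingroup.
Set Implicit Arguments. Unset Strict Implicit. Unset Printing Implicit Defensive.

Record sgraph := SGraph {
  sV : finType;
  sadj : rel sV;
  sadj_sym : symmetric sadj;
  sadj_irr : irreflexive sadj }.

(* Finite simple graph with vertex labels (countable set: nat) and edge
   features e_{u,v} (nat). *)
Record graph := Graph {
  gS : sgraph;
  vlab : sV gS -> nat;
  elab : sV gS -> sV gS -> nat }.

Notation gV G := (sV (gS G)).
Notation gadj G := (@sadj (gS G)).

Definition connected (H : sgraph) : Prop :=
  0 < #|sV H| /\ forall x y : sV H, connect (@sadj H) x y.

(* K_{1,m}, m >= 0 : some centre c adjacent exactly to all other vertices,
   no other edges. *)
Definition is_star (H : sgraph) : Prop :=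
  exists c : sV H, forall x y, sadj x y = (x != y) && ((x == c) || (y == c)).

Definition single_vertex (H : sgraph) : Prop := #|sV H| = 1.
Definition single_edge (H : sgraph) : Prop :=
  #|sV H| = 2 /\ exists x y : sV H, sadj x y.

Definition is_aut (H : sgraph) (g : {perm sV H}) : bool :=
  [forall a, forall b, sadj (g a) (g b) == sadj a b].

Definition in_vorbit (H : sgraph) (w w' : sV H) : bool :=
  [exists g : {perm sV H}, is_aut g && (g w == w')].

Definition in_eorbit (H : sgraph) (ab ab' : sV H * sV H) : bool :=
  [exists g : {perm sV H}, is_aut g && ((g ab.1, g ab.2) == ab')].

(* A subgraph G_S is a pair (V_S, E_S); E_S is a symmetric set of ordered
   pairs (i.e. a set of unordered edges), contained in E_G and in V_S x V_S. *)
Definition subg (V : finType) := ({set V} * {set (V * V)})%type.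

Definition is_subgraph (G : sgraph) (P : subg (sV G)) : bool :=
  [forall e in P.2, [&& e.1 \in P.1, e.2 \in P.1, sadj e.1 e.2 & (e.2, e.1) \in P.2]].

Definition is_induced (G : sgraph) (P : subg (sV G)) : bool :=
  P.2 == [set e | [&& e.1 \in P.1, e.2 \in P.1 & sadj e.1 e.2]].

Inductive match_mode := NonInduced | Induced.

Definition matches (m : match_mode) (G : sgraph) (P : subg (sV G)) : bool :=
  match m with
  | NonInduced => is_subgraph P
  | Induced => is_subgraph P && is_induced P
  end.

(* f (restricted to V_S) is an isomorphism G_S ~ H *)
Definition is_iso (G H : sgraph) (P : subg (sV G)) (f : {ffun sV G -> sV H}) : bool :=
  [&& [forall x in P.1, forall y in P.1, (f x == f y) ==> (x == y)],
      [forall h, exists x in P.1, f x == h] &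
      [forall x in P.1, forall y in P.1, ((x, y) \in P.2) == sadj (f x) (f y)]].

(* Vertex features: x^V_H(v), given as the function w |-> x^V_{H,i}(v)
   where i is the orbit of w (an injective re-encoding of the vector
   (x^V_{H,i}(v))_i). *)
Definition xV (m : match_mode) (H : sgraph) (G : sgraph) (v : sV G) : sV H -> nat :=
  fun w => #|[set P : subg (sV G) | [&& matches m P, v \in P.1 &
              [exists f : {ffun sV G -> sV H}, is_iso P f && in_vorbit w (f v)]]]|.

(* Edge features: x^E_H(u,v), as the function (a,b) |-> x^E_{H,i}(u,v)
   where i is the edge orbit of (a,b). *)
Definition xE (m : match_mode) (H : sgraph) (G : sgraph) (u v : sV G)
  : sV H * sV H -> nat :=
  fun ab => #|[set P : subg (sV G) | [&& matches m P, (u, v) \in P.2 &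
              [exists f : {ffun sV G -> sV H}, is_iso P f && in_eorbit ab (f u, f v)]]]|.

(* A generic message-passing network with extra per-pair input of type X.
   Multiset functions are functions on lists invariant under permutation. *)
Record net (X S Mg Out : Type) := Net {
  n_layers : nat;
  n_init : nat -> S;                      (* h^0_v from the input vertex label *)
  n_msg : nat -> list (S * S * X * nat) -> Mg;
  n_msg_inv : forall t l1 l2, Permutation l1 l2 -> n_msg t l1 = n_msg t l2;
  n_up : nat -> S -> Mg -> S;
  n_read : list S -> Out;
  n_read_inv : forall l1 l2, Permutation l1 l2 -> n_read l1 = n_read l2 }.

Fixpoint net_states X S Mg Out (N : net X S Mg Out) (G : graph)
    (x : gV G -> gV G -> X) (t : nat) : gV G -> S :=
  match t with
  | 0 => fun v => n_init N (vlab v)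
  | t'.+1 => fun v =>
      let h := net_states N x t' in
      n_up N t' (h v)
        (n_msg N t' [seq (h v, h u, x v u, elab u v) | u <- enum (gV G) & gadj G v u])
  end.

Definition net_out X S Mg Out (N : net X S Mg Out) (G : graph)
    (x : gV G -> gV G -> X) : Out :=
  n_read N [seq net_states N x (n_layers N) v | v <- enum (gV G)].

Definition mpnn_out S Mg Out (N : net unit S Mg Out) (G : graph) : Out :=
  @net_out _ _ _ _ N G (fun _ _ => tt).

Inductive gsn_variant := GSNv | GSNe.

(* Structural input for the message from neighbour u to v. *)
Definition feat_ty (H : sgraph) (var : gsn_variant) : Type :=
  match var with
  | GSNv => ((sV H -> nat) * (sV H -> nat))%type
  | GSNe => (sV H * sV H -> nat)%type
  end.

Definition feat (m : match_mode) (H : sgraph) (var : gsn_variant) (G : graph)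
    (v u : gV G) : feat_ty H var :=
  match var return feat_ty H var with
  | GSNv => (@xV m H (gS G) v, @xV m H (gS G) u)
  | GSNe => @xE m H (gS G) u v
  end.

Definition gsn_out (m : match_mode) (H : sgraph) (var : gsn_variant) S Mg Out
    (N : net (feat_ty H var) S Mg Out) (G : graph) : Out :=
  @net_out _ _ _ _ N G (@feat m H var G).

(* Injective HASH on (colour, multiset of colours): the multiset is
   represented by its sorted list; pickle is injective. *)
Definition wl_hash (c : nat) (s : seq nat) : nat := pickle (c, sort leq s).

Fixpoint wl_col (G : graph) (t : nat) : gV G -> nat :=
  match t with
  | 0 => fun v => vlab v
  | t'.+1 => fun v =>
      wl_hash (wl_col t' v) [seq wl_col t' u | u <- enum (gV G) & gadj G v u]
  end.

Definition wl_distinguishes (G1 G2 : graph) : Prop :=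
  exists t, ~~ perm_eq [seq wl_col t v | v <- enum (gV G1)]
                       [seq wl_col t v | v <- enum (gV G2)].

(* Main.v *)
Require Import Defs.
From Stdlib Require Import List Permutation.
From mathcomp Require Import all_boot all_fingroup.
Set Implicit Arguments. Unset Strict Implicit. Unset Printing Implicit Defensive.

Lemma size_filt (T : finType) (p : pred T) : size [seq u <- enum T | p u] = #|[pred u | p u]|.
Proof.
rewrite size_filter cardE /enum_mem size_filter count_filter; apply: eq_count => x.
by rewrite /= andbT.
Qed.

Lemma Perm_perm_eq (T : eqType) (l1 l2 : seq T) : Permutation l1 l2 -> perm_eq l1 l2.
Proof.
elim=> //=.
- by move=> x l l' _ H; rewrite perm_cons.
- by move=> x y l; apply/seq.permP => p /=; rewrite addnCA.
- by move=> l l' l'' _ H1 _ H2; apply: perm_trans H1 H2.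
Qed.

Lemma sort_perm_map (A : Type) (g : A -> nat) (l1 l2 : list A) :
  Permutation l1 l2 -> sort leq (map g l1) = sort leq (map g l2).
Proof.
move=> P; apply/perm_sortP; [exact: leq_total| exact: leq_trans| exact: anti_leq|].
exact/Perm_perm_eq/Permutation_map.
Qed.

Lemma has_perm (A : Type) (g : A -> bool) (l1 l2 : list A) :
  Permutation l1 l2 -> has g l1 = has g l2.
Proof.
elim=> //=.
- by move=> x l l' _ ->.
- by move=> x y l; rewrite orbCA.
- by move=> l l' l'' _ -> _ ->.
Qed.

Section A1.
Variables (X S Mg Out : Type) (N : net unit S Mg Out).
Definition dropx (p : S * S * X * nat) : S * S * unit * nat := (p.1.1.1, p.1.1.2, tt, p.2).
Lemma msg_inv t (l1 l2 : list (S * S * X * nat)) : Permutation l1 l2 -> n_msg N t (map dropx l1) = n_msg N t (map dropx l2).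
Proof. by move=> P; apply: n_msg_inv; apply: Permutation_map. Qed.
Definition simN : net X S Mg Out :=
  @Net X S Mg Out (n_layers N) (n_init N)
  (fun t l => n_msg N t (map dropx l)) msg_inv (n_up N) (n_read N) (@n_read_inv _ _ _ _ N).
Lemma simN_states (G : graph) (x : gV G -> gV G -> X) t (v : gV G) :
  net_states simN x t v = net_states N (fun _ _ => tt) t v.
Proof.
elim: t v => [|t IH] v; first by [].
rewrite [LHS]/= [RHS]/= -map_comp IH.
congr (n_up _ _ _ (n_msg _ _ _)).
by apply: eq_map => u /=; rewrite !IH.
Qed.

Lemma simN_out (G : graph) (x : gV G -> gV G -> X) :
  net_out simN x = mpnn_out N G.
Proof.
rewrite /net_out /mpnn_out /net_out /=; congr (n_read _ _).
by apply: eq_map => v; rewrite simN_states.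
Qed.
End A1.

Section A2.
Variables (X : Type) (t0 : nat).

Lemma wl_msg_inv (t : nat) (l1 l2 : list (nat * nat * X * nat)) : Permutation l1 l2 ->
  sort leq [seq p.1.1.2 | p <- l1] = sort leq [seq p.1.1.2 | p <- l2].
Proof. exact: sort_perm_map. Qed.

Lemma wl_read_inv (l1 l2 : list nat) : Permutation l1 l2 -> sort leq l1 = sort leq l2.
Proof. by move=> P; have := sort_perm_map id P; rewrite !map_id. Qed.

Definition wlN : net X nat (seq nat) (seq nat) :=
  @Net X nat (seq nat) (seq nat) t0 (fun c => c)
    (fun t l => sort leq [seq p.1.1.2 | p <- l]) wl_msg_inv
    (fun _ c s => pickle (c, s)) (sort leq) wl_read_inv.

Lemma wlN_states (G : graph) (x : gV G -> gV G -> X) t (v : gV G) :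
  net_states wlN x t v = @wl_col G t v.
Proof.
elim: t v => [|t IH] v; first by [].
rewrite [LHS]/= [RHS]/= /wl_hash -map_comp IH; congr (pickle (_, sort _ _)).
by apply: eq_map => u /=; rewrite IH.
Qed.

Lemma wlN_out (G : graph) (x : gV G -> gV G -> X) :
  net_out wlN x = sort leq [seq @wl_col G t0 v | v <- enum (gV G)].
Proof.
rewrite /net_out /=; congr (sort _ _); apply: eq_map => v; exact: wlN_states.
Qed.
End A2.

Lemma part_a (H : sgraph) (m : match_mode) (var : gsn_variant) :
  ((forall (S Mg Out : Type) (N : net unit S Mg Out),
      exists (S' Mg' : Type) (N' : net (feat_ty H var) S' Mg' Out),
        forall G : graph, gsn_out m N' G = mpnn_out N G) /\
   (forall G1 G2 : graph, wl_distinguishes G1 G2 ->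
      exists (S Mg Out : Type) (N : net (feat_ty H var) S Mg Out),
        gsn_out m N G1 <> gsn_out m N G2)).
Proof.
split.
- move=> S Mg Out N; exists S, Mg, (simN (feat_ty H var) N) => G.
  exact: simN_out.
- move=> G1 G2 [t Ht]; exists nat, (seq nat), (seq nat), (wlN (feat_ty H var) t).
  rewrite /gsn_out !wlN_out => E; move/negP: Ht; apply.
  exact/(perm_sortP leq_total leq_trans anti_leq).
Qed.



Definition mkG (V : finType) (a : rel V) (s : symmetric a) (i : irreflexive a) : graph :=
  @Graph (SGraph s i) (fun _ => 0) (fun _ _ => 0).

Lemma map_const (A B : Type) (c : B) (s : seq A) : [seq c | _ <- s] = nseq (size s) c.
Proof. by elim: s => //= x s ->. Qed.

Fixpoint wlc (d t : nat) : nat :=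
  if t is t'.+1 then wl_hash (wlc d t') (nseq d (wlc d t')) else 0.

Fixpoint stc S Mg Out (N : net unit S Mg Out) (d t : nat) : S :=
  if t is t'.+1 then n_up N t' (stc N d t') (n_msg N t' (nseq d (stc N d t', stc N d t', tt, 0)))
  else n_init N 0.

Section Reg.
Variables (V : finType) (a : rel V) (s : symmetric a) (i : irreflexive a) (d : nat).
Hypothesis deg : forall v, #|[pred u | a v u]| = d.

Lemma reg_wl t (v : V) : @wl_col (mkG s i) t v = wlc d t.
Proof.
elim: t v => [|t IH] v //=.
rewrite IH; congr (wl_hash _ _).
rewrite (eq_map (g := fun=> wlc d t)) // map_const.
by rewrite (size_filt (a v)) deg.
Qed.

Lemma reg_wl_list t : [seq @wl_col (mkG s i) t v | v <- enum V] = nseq #|V| (wlc d t).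
Proof. by rewrite (eq_map (g := fun=> wlc d t)) ?map_const -?cardT // => v; rewrite reg_wl. Qed.

Lemma reg_st S Mg Out (N : net unit S Mg Out) t (v : V) :
  @net_states _ _ _ _ N (mkG s i) (fun _ _ => tt) t v = stc N d t.
Proof.
elim: t v => [|t IH] v //=.
rewrite IH; congr (n_up _ _ _ (n_msg _ _ _)).
rewrite (eq_map (g := fun=> (stc N d t, stc N d t, tt, 0))); last by move=> u; rewrite IH.
by rewrite map_const (size_filt (a v)) deg.
Qed.

Lemma reg_out S Mg Out (N : net unit S Mg Out) :
  mpnn_out N (mkG s i) = n_read N (nseq #|V| (stc N d (n_layers N))).
Proof.
rewrite /mpnn_out /net_out; congr (n_read _ _).
by rewrite (eq_map (g := fun=> stc N d (n_layers N))) ?map_const -?cardT // => v; rewrite reg_st.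
Qed.
End Reg.

Lemma reg_equiv (V : finType) (a1 a2 : rel V) (s1 : symmetric a1) (i1 : irreflexive a1)
  (s2 : symmetric a2) (i2 : irreflexive a2) d :
  (forall v, #|[pred u | a1 v u]| = d) -> (forall v, #|[pred u | a2 v u]| = d) ->
  ~ wl_distinguishes (mkG s1 i1) (mkG s2 i2) /\
  forall S Mg Out (N : net unit S Mg Out), mpnn_out N (mkG s1 i1) = mpnn_out N (mkG s2 i2).
Proof.
move=> d1 d2; split.
- move=> [t]; rewrite (reg_wl_list s1 i1 d1) (reg_wl_list s2 i2 d2).
  by rewrite perm_refl.
- by move=> S Mg Out N; rewrite (reg_out s1 i1 d1) (reg_out s2 i2 d2).
Qed.


Lemma sub_edge (G : sgraph) (P : Defs.subg (sV G)) x y : is_subgraph P -> (x, y) \in P.2 ->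
  [/\ x \in P.1, y \in P.1, sadj x y & (y, x) \in P.2].
Proof. by move=> /forallP /(_ (x, y)) /implyP H /H /and4P []. Qed.

Lemma iso_pre (G H : sgraph) (P : Defs.subg (sV G)) (f : {ffun sV G -> sV H}) :
  is_subgraph P -> is_iso P f ->
  exists pre : sV H -> sV G,
    [/\ forall h, f (pre h) = h,
        forall h k, sadj h k -> sadj (pre h) (pre k) &
        is_induced P -> forall h k, sadj (pre h) (pre k) -> sadj h k].
Proof.
move=> sP /and3P [_ /forallP surj /forallP ed].
have exP : forall h, exists x, (x \in P.1) && (f x == h).
  by move=> h; apply/existsP; exact: surj.
pose pre h := xchoose (exP h).
have preP : forall h, (pre h \in P.1) && (f (pre h) == h) by move=> h; exact: (xchooseP (exP h)).
have pin : forall h, pre h \in P.1 by move=> h; case/andP: (preP h).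
have fpre : forall h, f (pre h) = h by move=> h; case/andP: (preP h) => _ /eqP.
have edE : forall h k, ((pre h, pre k) \in P.2) = sadj h k.
  move=> h k; have := ed (pre h); rewrite pin /= => /forallP /(_ (pre k)).
  by rewrite pin /= !fpre => /eqP.
exists pre; split => //.
- by move=> h k hk; rewrite -edE in hk; case: (sub_edge sP hk).
- move=> /eqP ind h k a; rewrite -edE ind inE /= !pin /=; exact: a.
Qed.

Lemma conn_const (T : finType) (e : rel T) (T' : eqType) (g : T -> T') :
  (forall x y, e x y -> g x = g y) -> forall x y, connect e x y -> g x = g y.
Proof.
move=> He x y /connectP [p pth ->]; elim: p x pth => //= z p IH x /andP [exz pz].
by rewrite (He _ _ exz) IH.
Qed.

Lemma first_step (T : finType) (e : rel T) x y : x != y -> connect e x y -> exists w, e x w.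
Proof.
move=> nxy /connectP [[|w p] /= pth E]; first by rewrite E eqxx in nxy.
by exists w; case/andP: pth.
Qed.

Lemma has_edge (H : sgraph) : connected H -> #|sV H| != 1 -> exists x y : sV H, sadj x y.
Proof.
move=> [n0 conn] n1.
have [x _] : exists x : sV H, true by case/card_gt0P: n0 => x _; exists x.
have : 0 < #|predC1 x|.
  by rewrite cardC1; move: n0 n1; case: #|sV H| => [|[|k]].
case/card_gt0P => y /= yx.
have yx' : x != y by rewrite eq_sym.
have [w xw] := first_step yx' (conn x y).
by exists x, w.
Qed.

Lemma emb_copy (G H : sgraph) (phi : sV H -> sV G) (h0 : sV H) :
  injective phi -> (forall h k, sadj h k -> sadj (phi h) (phi k)) ->
  exists (P : Defs.subg (sV G)) (f : {ffun sV G -> sV H}),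
    [/\ is_subgraph P, is_iso P f,
        ((forall h k, sadj (phi h) (phi k) -> sadj h k) -> is_induced P) &
        forall h k, sadj h k -> (phi h, phi k) \in P.2].
Proof.
move=> inj hom.
pose P1 := [set x | [exists h, phi h == x]].
pose P2 := [set e | [exists h, exists k, (e == (phi h, phi k)) && sadj h k]].
pose f := [ffun x => odflt h0 [pick h | phi h == x]].
have fphi : forall h, f (phi h) = h.
  move=> h; rewrite ffunE; case: pickP => [k /eqP /inj -> //|].
  by move/(_ h); rewrite eqxx.
have inP1 : forall x, (x \in P1) = [exists h, phi h == x] by move=> x; rewrite inE.
have phiP1 : forall h, phi h \in P1 by move=> h; rewrite inP1; apply/existsP; exists h.
have P1E : forall x, x \in P1 -> exists h, x = phi h.
  by move=> x; rewrite inP1 => /existsP [h /eqP <-]; exists h.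
have P2E : forall h k, ((phi h, phi k) \in P2) = sadj h k.
  move=> h k; rewrite inE; apply/existsP/idP => [[h' /existsP [k' /andP [/eqP [/inj <- /inj <-] //]]]|hk].
  by exists h; apply/existsP; exists k; rewrite eqxx.
have P2E' : forall e, e \in P2 -> exists h k, e = (phi h, phi k).
  by move=> e; rewrite inE => /existsP [h /existsP [k /andP [/eqP -> _]]]; exists h, k.
have sP : is_subgraph (P1, P2).
  apply/forallP => e; apply/implyP => /= eP; have [h [k E]] := P2E' e eP.
  move: eP; rewrite E /= P2E => hk; rewrite !phiP1 hom //= P2E.
  by rewrite sadj_sym.
exists (P1, P2), f; split => //.
- apply/and3P; split.
  + apply/forallP => x; apply/implyP => /P1E [h ->]; apply/forallP => y; apply/implyP => /P1E [k ->].
    by rewrite !fphi; apply/implyP => /eqP ->.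
  + by apply/forallP => h; apply/existsP; exists (phi h); rewrite phiP1 fphi eqxx.
  + apply/forallP => x; apply/implyP => /P1E [h ->]; apply/forallP => y; apply/implyP => /P1E [k ->].
    by rewrite !fphi /= P2E.
- move=> refl; apply/eqP/setP => [[x y]]; rewrite [RHS]inE /=.
  apply/idP/idP => [xy | /and3P [/P1E [h ->] /P1E [k ->] hk]].
    by have [-> -> -> _] := sub_edge sP xy.
  by rewrite P2E; apply: refl.
- by move=> h k hk; rewrite P2E.
Qed.
Lemma card_boolX (V : finType) (p : pred (bool * V)) :
  #|[pred u | p u]| = #|[pred y | p (true, y)]| + #|[pred y | p (false, y)]|.
Proof.
rewrite -!sum1_card.
rewrite (eq_bigl (fun u : bool * V => xpredT u.1 && p (u.1, u.2))); last first.
  by move=> [b y]; rewrite /= inE.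
rewrite -(pair_big_dep xpredT (fun b y => p (b, y)) (fun _ _ => 1)) /= big_bool /=.
by congr (_ + _); apply: eq_bigl => y; rewrite inE.
Qed.

Section Fam.
Variable (H : sgraph).
Notation V := (sV H).
Notation a := (@sadj H).

Lemma deg_split (x : V) : #|[pred y | a x y]| + #|[pred y | (x != y) && ~~ a x y]| = #|V|.-1.
Proof.
rewrite -(cardC1 x) -(cardID [pred y | a x y] (predC1 x)); congr (_ + _); apply: eq_card => y;
  rewrite !inE /=.
- by case: (eqVneq y x) => [->|]; rewrite ?sadj_irr //= andbT.
- by rewrite eq_sym andbC.
Qed.

Definition adjSw (u v : bool * V) : bool :=
  if u.1 == v.1 then a u.2 v.2 else (u.2 != v.2) && ~~ a u.2 v.2.
Definition adjBm (u v : bool * V) : bool := (u.1 != v.1) && (u.2 != v.2).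
Definition adjC2 (u v : bool * V) : bool := (u.1 == v.1) && (u.2 != v.2).

Lemma symSw : symmetric adjSw.
Proof. by move=> u v; rewrite /adjSw eq_sym sadj_sym [u.2 == _]eq_sym. Qed.
Lemma irrSw : irreflexive adjSw.
Proof. by move=> u; rewrite /adjSw eqxx sadj_irr. Qed.
Lemma symBm : symmetric adjBm.
Proof. by move=> u v; rewrite /adjBm eq_sym [u.2 == _]eq_sym. Qed.
Lemma irrBm : irreflexive adjBm.
Proof. by move=> u; rewrite /adjBm eqxx. Qed.
Lemma symC2 : symmetric adjC2.
Proof. by move=> u v; rewrite /adjC2 eq_sym [u.2 == _]eq_sym. Qed.
Lemma irrC2 : irreflexive adjC2.
Proof. by move=> u; rewrite /adjC2 !eqxx. Qed.

Lemma degSw v : #|[pred u | adjSw v u]| = #|V|.-1.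
Proof.
case: v => s x; rewrite card_boolX /adjSw /= -(deg_split x).
case: s; [|rewrite addnC]; congr (_ + _); apply: eq_card => y; by rewrite !inE.
Qed.

Lemma degBm v : #|[pred u | adjBm v u]| = #|V|.-1.
Proof.
case: v => s x; rewrite card_boolX /adjBm /= -(cardC1 x).
have E0 : forall b : bool, #|[pred y : V | (b != b) && (x != y)]| = 0.
  by move=> b; apply/eq_card0 => y; rewrite !inE eqxx.
have E1 : #|[pred y : V | x != y]| = #|predC1 x| by apply: eq_card => y; rewrite !inE eq_sym.
by case: s; rewrite E0 E1 ?addn0.
Qed.

Lemma degC2 v : #|[pred u | adjC2 v u]| = #|V|.-1.
Proof.
case: v => s x; rewrite card_boolX /adjC2 /= -(cardC1 x).
have E0 : forall b, #|[pred y : V | (b == ~~ b) && (x != y)]| = 0.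
  by move=> b; apply/eq_card0 => y; rewrite !inE; case: b.
have E1 : #|[pred y : V | x != y]| = #|predC1 x| by apply: eq_card => y; rewrite !inE eq_sym.
by case: s; rewrite ?E0 E1 ?addn0.
Qed.
End Fam.

Section Fam2.
Variable (H : sgraph).
Notation V := (sV H).
Notation a := (@sadj H).

Definition sgSw := SGraph (@symSw H) (@irrSw H).
Definition sgBm := SGraph (@symBm H) (@irrBm H).
Definition sgC2 := SGraph (@symC2 H) (@irrC2 H).

Lemma copySw (ea eb : V) : a ea eb ->
  exists (P : Defs.subg (sV sgSw)) (f : {ffun sV sgSw -> V}) x y,
    [/\ is_subgraph P, is_induced P, is_iso P f & (x, y) \in P.2].
Proof.
move=> eab.
have inj : injective (fun h : V => ((false, h) : sV sgSw)) by move=> h k [].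
have hom : forall h k, a h k -> @sadj sgSw (false, h) (false, k) by move=> h k; rewrite /= /adjSw /=.
have [P [f [sP iso ind ed]]] := emb_copy ea inj hom.
exists P, f, (false, ea), (false, eb); split => //; last exact: ed.
by apply: ind => h k; rewrite /= /adjSw /=.
Qed.

Lemma nocopyBm : ~ (exists c : V -> bool, forall h k, a h k -> c h != c k) ->
  forall (P : Defs.subg (sV sgBm)) (f : {ffun sV sgBm -> V}), is_subgraph P -> is_iso P f -> False.
Proof.
move=> nb P f sP iso; have [pre [_ hom _]] := iso_pre sP iso.
apply: nb; exists (fun h => (pre h).1) => h k /hom.
by rewrite /= /adjBm => /andP [].
Qed.

Lemma nocopyC2 : connected H -> ~ (forall h k : V, h != k -> a h k) ->
  forall (P : Defs.subg (sV sgC2)) (f : {ffun sV sgC2 -> V}),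
    is_subgraph P -> is_induced P -> is_iso P f -> False.
Proof.
move=> [_ conn] nc P f sP ind iso; have [pre [fpre hom refl]] := iso_pre sP iso.
have c1 : forall h k, (pre h).1 = (pre k).1.
  move=> h k; apply: (@conn_const _ a _ (fun h => (pre h).1)); last exact: conn.
  by move=> x y /hom; rewrite /= /adjC2 => /andP [/eqP].
apply: nc => h k hk; apply: (refl ind); rewrite /= /adjC2 (c1 h k) eqxx /=.
apply: contra hk => /eqP E.
have : pre h = pre k by rewrite [pre h]surjective_pairing [pre k]surjective_pairing (c1 h k) E.
by move=> /(congr1 f); rewrite !fpre => ->.
Qed.
End Fam2.



Lemma matches_sub m (G : sgraph) (P : Defs.subg (sV G)) : matches m P -> is_subgraph P.
Proof. by case: m => //= /andP []. Qed.



Lemma vorbit_refl (H : sgraph) (w : sV H) : in_vorbit w w.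
Proof.
apply/existsP; exists 1%g; apply/andP; split; last by rewrite perm1.
by apply/forallP => a; apply/forallP => b; rewrite !perm1.
Qed.

Lemma eorbit_refl (H : sgraph) (ab : sV H * sV H) : in_eorbit ab ab.
Proof.
apply/existsP; exists 1%g; apply/andP; split; last by rewrite !perm1 -surjective_pairing.
by apply/forallP => a; apply/forallP => b; rewrite !perm1.
Qed.

Section GSN.
Variables (H : sgraph) (m : match_mode) (var : gsn_variant).

Definition posf : feat_ty H var -> bool :=
  match var return feat_ty H var -> bool with
  | GSNv => fun x => [exists w : sV H, 0 < x.1 w]
  | GSNe => fun x => [exists ab : sV H * sV H, 0 < x ab]
  end.

Lemma gsn_msg_inv (t : nat) (l1 l2 : list (bool * bool * feat_ty H var * nat)) :
  Permutation l1 l2 -> has (fun p => posf p.1.2) l1 = has (fun p => posf p.1.2) l2.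
Proof. exact: has_perm. Qed.

Lemma gsn_read_inv (l1 l2 : list bool) : Permutation l1 l2 -> has id l1 = has id l2.
Proof. exact: has_perm. Qed.

Definition gsnN : net (feat_ty H var) bool bool bool :=
  @Net (feat_ty H var) bool bool bool 1 (fun _ => false)
    (fun _ l => has (fun p => posf p.1.2) l) gsn_msg_inv
    (fun _ _ b => b) (has id) gsn_read_inv.

Lemma gsn_outE (G : graph) :
  gsn_out m gsnN G = has (fun v => has (fun u => posf (@feat m H var G v u))
                                     [seq u <- enum (gV G) | gadj G v u]) (enum (gV G)).
Proof.
rewrite /gsn_out /net_out /= has_map; apply: eq_has => v /=.
by rewrite has_map.
Qed.

Lemma gsn_false (G : graph) :
  (forall (P : Defs.subg (gV G)) (f : {ffun gV G -> sV H}), matches m P -> is_iso P f -> False) ->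
  gsn_out m gsnN G = false.
Proof.
move=> nc; rewrite gsn_outE; apply/hasPn => v _; apply/hasPn => u _.
have z1 : forall v w, @xV m H (gS G) v w = 0.
  move=> v' w; apply/eqP; rewrite cards_eq0; apply/eqP/setP => P; rewrite !inE.
  apply/negP => /and3P [mP _ /existsP [f /andP [iso _]]]; exact: nc mP iso.
have z2 : forall u v ab, @xE m H (gS G) u v ab = 0.
  move=> u' v' ab; apply/eqP; rewrite cards_eq0; apply/eqP/setP => P; rewrite !inE.
  apply/negP => /and3P [mP _ /existsP [f /andP [iso _]]]; exact: nc mP iso.
rewrite /posf /feat; case: var => /=; apply/negP => /existsP [w];
  by rewrite ?z1 ?z2.
Qed.

Lemma gsn_true (G : graph) (P : Defs.subg (gV G)) (f : {ffun gV G -> sV H}) x y :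
  matches m P -> is_iso P f -> (x, y) \in P.2 -> gsn_out m gsnN G = true.
Proof.
move=> mP iso xy; have [_ yP axy _] := sub_edge (matches_sub mP) xy.
rewrite gsn_outE; apply/hasP; exists y; first exact: mem_enum.
apply/hasP; exists x; first by rewrite mem_filter mem_enum sadj_sym axy.
rewrite /posf /feat; case: var => /=; apply/existsP.
- exists (f y); apply/card_gt0P; exists P; rewrite !inE mP yP /=.
  by apply/existsP; exists f; rewrite iso vorbit_refl.
- exists (f x, f y); apply/card_gt0P; exists P; rewrite !inE mP xy /=.
  by apply/existsP; exists f; rewrite iso eorbit_refl.
Qed.
End GSN.

Section Blocks.
Variable K : nat.
Definition U : finType := ('I_K.+2 * (bool * 'I_K.+1))%type.
Definition adjK (u v : U) : bool := (u.2 == v.2) && (u.1 != v.1).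
Definition adjKN (u v : U) : bool := (u.1 == v.1) && (u.2.1 != v.2.1).
Lemma symK : symmetric adjK.
Proof. by move=> u v; rewrite /adjK eq_sym [u.1 == _]eq_sym. Qed.
Lemma irrK : irreflexive adjK.
Proof. by move=> u; rewrite /adjK !eqxx. Qed.
Lemma symKN : symmetric adjKN.
Proof. by move=> u v; rewrite /adjKN eq_sym [u.2.1 == _]eq_sym. Qed.
Lemma irrKN : irreflexive adjKN.
Proof. by move=> u; rewrite /adjKN !eqxx andbF. Qed.

Lemma degK v : #|[pred u | adjK v u]| = K.+1.
Proof.
rewrite (@eq_card _ _ (setX [set~ v.1] [set v.2])); last first.
  by move=> w; rewrite !inE /adjK eq_sym [w.1 == _]eq_sym andbC.
by rewrite cardsX cardsC1 cards1 card_ord muln1.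
Qed.

Lemma degKN v : #|[pred u | adjKN v u]| = K.+1.
Proof.
rewrite (@eq_card _ _ (setX [set v.1] (setX [set ~~ v.2.1] [set: 'I_K.+1]))); last first.
  move=> w; rewrite !inE /adjKN eq_sym andbT; congr (_ && _).
  by case: (w.2.1); case: (v.2.1).
by rewrite !cardsX !cards1 cardsT card_ord !mul1n.
Qed.

Definition sgK := SGraph symK irrK.
Definition sgKN := SGraph symKN irrKN.

Lemma nocopyK (H : sgraph) : connected H -> #|sV H| = K.+3 ->
  forall (P : Defs.subg (sV sgK)) (f : {ffun sV sgK -> sV H}), is_subgraph P -> is_iso P f -> False.
Proof.
move=> [_ conn] nH P f sP iso; have [pre [fpre hom _]] := iso_pre sP iso.
have c2 : forall h k, (pre h).2 = (pre k).2.
  move=> h k; apply: (@conn_const _ (@sadj H) _ (fun h => (pre h).2)); last exact: conn.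
  by move=> x y /hom; rewrite /= /adjK => /andP [/eqP].
have inj : injective (fun h => (pre h).1).
  move=> h k /= E.
  have : pre h = pre k by rewrite [pre h]surjective_pairing [pre k]surjective_pairing (c2 h k) E.
  by move=> /(congr1 f); rewrite !fpre.
by have := leq_card _ inj; rewrite nH card_ord ltnn.
Qed.

Lemma copyKN (H : sgraph) (c : sV H -> bool) (ea eb : sV H) :
  (forall h k, sadj h k -> c h != c k) ->
  (forall b, #|[pred k | c k == b]| <= K.+1) -> sadj ea eb ->
  exists (P : Defs.subg (sV sgKN)) (f : {ffun sV sgKN -> sV H}) x y,
    [/\ is_subgraph P, is_iso P f & (x, y) \in P.2].
Proof.
move=> prop sz eab.
pose rho (h : sV H) : 'I_K.+1 := inord (index h (enum [pred k | c k == c h])).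
pose phi (h : sV H) : sV sgKN := (ord0, (c h, rho h)).
have inj : injective phi.
  move=> h k [E1 E2].
  have mh : h \in enum [pred k | c k == c h] by rewrite mem_enum inE.
  have mk : k \in enum [pred k | c k == c h] by rewrite mem_enum inE E1.
  have lt : forall x, x \in enum [pred k | c k == c h] ->
      index x (enum [pred k | c k == c h]) < K.+1.
    move=> x mx; apply: leq_trans (sz (c h)); rewrite cardE index_mem //.
  move: E2; rewrite /rho -E1 => /(congr1 (@nat_of_ord _)); rewrite !inordK ?lt //.
  exact: index_inj.
have hom : forall h k, sadj h k -> @sadj sgKN (phi h) (phi k).
  by move=> h k hk; rewrite /= /adjKN /= ?eqxx (prop _ _ hk).
have [P [f [sP iso _ ed]]] := emb_copy ea inj hom.
by exists P, f, (phi ea), (phi eb); split => //; exact: ed.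
Qed.
End Blocks.


Lemma single_star (H : sgraph) : #|sV H| = 1 -> is_star H.
Proof.
move=> n1; have [z _] : exists z : sV H, true.
  by have /card_gt0P [z _] : 0 < #|sV H| by rewrite n1.
exists z => x y.
have E : forall u : sV H, u = z.
  move=> u; apply/eqP; apply: contraT => uz.
  by have := max_card (pred2 u z); rewrite card2 uz n1.
by rewrite (E x) (E y) sadj_irr eqxx.
Qed.

Lemma class_ge2 (H : sgraph) (c : sV H -> bool) :
  connected H -> ~ is_star H -> (forall h k, sadj h k -> c h != c k) ->
  forall b, 1 < #|[pred k | c k == b]|.
Proof.
move=> [n0 conn] ns prop b; rewrite ltnNge; apply/negP => le1; apply: ns.
have [z zP] : exists z, forall k, c k == b -> k == z.
  case: (pickP [pred k | c k == b]) => [z zb | none].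
  - exists z => k kb; move/card_le1P: le1 => /(_ z zb) E.
    by move: (E k); rewrite !inE kb => /esym.
  - have [h0 _] := card_gt0P n0; exists h0 => k kb.
    by have := none k; rewrite /= kb.
have bb' : forall (b' : bool) x y, c x != c y -> c x != b' -> c y == b'.
  by move=> b' x y; case: (c x); case: (c y); case: b'.
have bb := bb' b.
have helper : forall w, w != z -> sadj w z.
  move=> w wz; have [u wu] := first_step wz (conn w z).
  have cw : c w != b by apply: contra wz; exact: zP.
  by have /eqP <- := zP _ (bb _ _ (prop _ _ wu) cw).
exists z => x y; case axy: (sadj x y).
- have nxy : x != y by apply/eqP => E; rewrite E sadj_irr in axy.
  rewrite nxy /=; case cx: (c x == b); first by rewrite (zP _ cx).
  by rewrite (zP _ (bb _ _ (prop _ _ axy) (negbT cx))) orbT.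
- apply/esym/negP => /andP [nxy /orP [/eqP xz | /eqP yz]].
  + move: axy; rewrite xz sadj_sym helper //; by rewrite -xz eq_sym.
  + by move: axy; rewrite yz helper // -yz.
Qed.

Lemma bip_complete (H : sgraph) (c : sV H -> bool) :
  (forall h k, sadj h k -> c h != c k) -> (forall h k : sV H, h != k -> sadj h k) ->
  #|sV H| <= 2.
Proof.
move=> prop comp.
have inj : injective c.
  move=> h k E; apply/eqP; apply: contraT => nhk.
  by have := prop _ _ (comp _ _ nhk); rewrite E eqxx.
by have := leq_card _ inj; rewrite card_bool.
Qed.

From mathcomp Require Import zify.
Lemma class_bounds (H : sgraph) (c : sV H -> bool) :
  connected H -> ~ is_star H -> (forall h k, sadj h k -> c h != c k) ->
  #|sV H| = (#|sV H| - 3).+3 /\ forall b, #|[pred k | c k == b]| <= (#|sV H| - 3).+1.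
Proof.
move=> Hc ns prop; have g2 := class_ge2 Hc ns prop.
have sum : #|[pred k | c k == true]| + #|[pred k | c k == false]| = #|sV H|.
  rewrite -(cardC [pred k | c k == true]); congr (_ + _); apply: eq_card => k.
  by rewrite !inE; case: (c k).
have gt := g2 true; have gf := g2 false.
split; first lia.
by case; lia.
Qed.

Lemma final_b (H : sgraph) (m : match_mode) (var : gsn_variant) (V : finType) (a1 a2 : rel V)
  (s1 : symmetric a1) (i1 : irreflexive a1) (s2 : symmetric a2) (i2 : irreflexive a2) d :
  (forall v, #|[pred u | a1 v u]| = d) -> (forall v, #|[pred u | a2 v u]| = d) ->
  (forall (P : Defs.subg (sV (SGraph s1 i1))) (f : {ffun sV (SGraph s1 i1) -> sV H}),
      matches m P -> is_iso P f -> False) ->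
  (exists (P : Defs.subg (sV (SGraph s2 i2))) (f : {ffun sV (SGraph s2 i2) -> sV H}) x y,
      [/\ matches m P, is_iso P f & (x, y) \in P.2]) ->
  exists G1 G2 : graph,
      ~ wl_distinguishes G1 G2 /\
      (forall (S Mg Out : Type) (N : net unit S Mg Out), mpnn_out N G1 = mpnn_out N G2) /\
      exists (S Mg Out : Type) (N : net (feat_ty H var) S Mg Out),
        gsn_out m N G1 <> gsn_out m N G2.
Proof.
move=> d1 d2 nc [P [f [x [y [mP iso xy]]]]].
have [nw mp] := reg_equiv s1 i1 s2 i2 d1 d2.
exists (mkG s1 i1), (mkG s2 i2); split => //; split => //.
exists bool, bool, bool, (gsnN H var).
rewrite (@gsn_false H m var (mkG s1 i1) nc) (@gsn_true H m var (mkG s2 i2) P f x y mP iso xy).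
by [].
Qed.

From mathcomp Require Import zify.

Theorem theorem3p1 (H : sgraph) (m : match_mode) (var : gsn_variant) :
  connected H ->
  (m = NonInduced /\ ~ is_star H) \/
  (m = Induced /\ ~ single_vertex H /\ ~ single_edge H) ->
  (* (a) GSN at least as powerful as MPNNs and 1-WL *)
  ((forall (S Mg Out : Type) (N : net unit S Mg Out),
      exists (S' Mg' : Type) (N' : net (feat_ty H var) S' Mg' Out),
        forall G : graph, gsn_out m N' G = mpnn_out N G) /\
   (forall G1 G2 : graph, wl_distinguishes G1 G2 ->
      exists (S Mg Out : Type) (N : net (feat_ty H var) S Mg Out),
        gsn_out m N G1 <> gsn_out m N G2)) /\
  (* (b) strictly more powerful *)
  (exists G1 G2 : graph,
      ~ wl_distinguishes G1 G2 /\
      (forall (S Mg Out : Type) (N : net unit S Mg Out), mpnn_out N G1 = mpnn_out N G2) /\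
      exists (S Mg Out : Type) (N : net (feat_ty H var) S Mg Out),
        gsn_out m N G1 <> gsn_out m N G2).
Proof.
move=> Hc Hcase; split; first exact: part_a.
have n1 : #|sV H| != 1.
  apply/eqP => E; case: Hcase => [[_ ns]|[_ [nsv _]]]; [exact: ns (single_star E) | exact: nsv E].
have [ea [eb eab]] := has_edge Hc n1.
case: (boolP [exists c : {ffun sV H -> bool}, [forall h, forall k, sadj h k ==> (c h != c k)]])
  => [bip | nbip].
- case/existsP: bip => cf /forallP cP.
  have prop : forall h k, sadj h k -> cf h != cf k.
    by move=> h k hk; have /forallP /(_ k) /implyP := cP h; apply.
  case: m Hcase => Hcase.
  + have ns : ~ is_star H by case: Hcase => [[_ ns] | [E _]].
    have [nH sizes] := class_bounds Hc ns prop.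
    set K := #|sV H| - 3 in nH sizes.
    apply: (@final_b H _ var _ _ _ (@symK K) (@irrK K) (@symKN K) (@irrKN K) K.+1).
    * exact: degK.
    * exact: degKN.
    * move=> P f mP iso; exact: (nocopyK Hc nH (matches_sub mP) iso).
    * have [P [f [x [y [sP iso xy]]]]] := copyKN prop sizes eab.
      by exists P, f, x, y; split.
  + have [_ [nsv nse]] : Induced = Induced /\ ~ single_vertex H /\ ~ single_edge H.
      by case: Hcase => [[E _] | //].
    have ncomp : ~ (forall h k : sV H, h != k -> sadj h k).
      move=> comp; apply: nse; split; last by exists ea, eb.
      have := bip_complete prop comp; case: Hc => n0 _; move: n0 n1; lia.
    apply: (@final_b H _ var _ _ _ (@symC2 H) (@irrC2 H) (@symSw H) (@irrSw H) #|sV H|.-1).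
    * exact: degC2.
    * exact: degSw.
    * by move=> P f /andP [sP ind] iso; exact: (nocopyC2 Hc ncomp sP ind iso).
    * have [P [f [x [y [sP ind iso xy]]]]] := copySw eab.
      by exists P, f, x, y; split => //=; rewrite sP ind.
- have nb : ~ (exists c : sV H -> bool, forall h k, sadj h k -> c h != c k).
    move=> [c cP]; apply: (negP nbip); apply/existsP; exists [ffun h => c h].
    apply/forallP => h; apply/forallP => k; apply/implyP => hk; rewrite !ffunE; exact: cP.
  apply: (@final_b H _ var _ _ _ (@symBm H) (@irrBm H) (@symSw H) (@irrSw H) #|sV H|.-1).
  + exact: degBm.
  + exact: degSw.
  + move=> P f mP iso; exact: (nocopyBm nb (matches_sub mP) iso).
  + have [P [f [x [y [sP ind iso xy]]]]] := copySw eab.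
    by exists P, f, x, y; split => //; case: m {Hcase} => /=; rewrite ?sP ?ind.
Qed.
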